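(* Let $\mathcal{X}=\prod_{r=1}^d\mathcal{Z}_r$ be a product of nonempty convex compact subsets of Euclidean spaces, $F$ an $L$-Lipschitz operator on $\mathcal{X}$ with components $F_r$, $B_F:=\max_r\sup_{x}\|F_r(x)\|_2$, and suppose the average $(\alpha,\ell,h)$-generalized Minty property holds. Then the iterates of rescaled optimistic gradient descent with learning rate $\eta\le\frac14\sqrt{\frac{\ell}{h^3L^2+hB_F^2\alpha^2d}}$ satisfy, for every $T\in\mathbb{N}$, $$\sum_{t=1}^T\Big(\|x^{(t)}-\hat x^{(t)}\|_2^2+\|x^{(t)}-\hat x^{(t+1)}\|_2^2\Big)\le\frac{2D_{\mathcal{X}}^2h}{\ell}.$$
   Context: $D_{\mathcal{X}}$ is the $\ell_2$ diameter of $\mathcal{X}$. $\mathbf{1}_{\mathcal{Z}_r}$ is the indicator vector of the coordinates of $\mathcal{Z}_r$; $\circ$ is the coordinatewise product; vector inequalities are coordinatewise. $A(x)=\sum_r a_r(x)\mathbf{1}_{\mathcal{Z}_r}$ with each $a_r$ $\alpha$-Lipschitz and $0<\ell\le A(x)\le h$; $W(x)=\sum_r w_r(x)\mathbf{1}_{\mathcal{Z}_r}$ with $0<\ell\le W(x)\le h$. The average $(\alpha,\ell,h)$-generalized Minty property: for every $T$ and sequence $(x^{(t)})_{t\le T}$ in $\mathcal{X}$ there is $x^\star\in\mathcal{X}$ with $\sum_{t=1}^T\langle x^{(t)}-x^\star,F(x^{(t)})\circ A(x^{(t)})\circ W(x^\star)\rangle\ge0$. Rescaled optimistic gradient descent: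 from arbitrary $x^{(0)}=\hat x^{(1)}\in\mathcal{X}$, $x^{(t)}=\Pi_{\mathcal{X}}(\hat x^{(t)}-\eta A(x^{(t-1)})\circ F(x^{(t-1)}))$ and $\hat x^{(t+1)}=\Pi_{\mathcal{X}}(\hat x^{(t)}-\eta A(x^{(t)})\circ F(x^{(t)}))$ for $t\ge1$, $\Pi_{\mathcal{X}}$ the Euclidean projection. *)

(* Defs.v *)
From HB Require Import structures.
From mathcomp Require Import all_boot all_order all_algebra.
From mathcomp Require Import all_classical all_reals all_analysis.
Set Implicit Arguments. Unset Strict Implicit. Unset Printing Implicit Defensive.
Import numFieldNormedType.Exports.
Import Order.TTheory GRing.Theory Num.Theory.
Local Open Scope classical_set_scope.
Local Open Scope ring_scope.

Section Defs.
Variables (R : realType) (n : nat).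
Notation vec := 'rV[R]_n.

Definition dotv (x y : vec) : R := \sum_(i < n) x ord0 i * y ord0 i.
Definition norm2 (x : vec) : R := Num.sqrt (dotv x x).

Definition hadamard (x y : vec) : vec := \row_i (x ord0 i * y ord0 i).

Definition convex_vset (S : set vec) : Prop :=
  forall x y, S x -> S y -> forall t : R, 0 <= t -> t <= 1 ->
    S (t *: x + (1 - t) *: y).

Definition is_proj (S : set vec) (y p : vec) : Prop :=
  S p /\ forall z, S z -> norm2 (y - p) <= norm2 (y - z).

Definition diam2 (S : set vec) : R :=
  sup [set norm2 (x - y) | x in S & y in S].

Variable d : nat.
Variable blk : 'I_n -> 'I_d. (* coordinate i belongs to block Z_(blk i) *)

Definition blockv (r : 'I_d) (x : vec) : vec :=
  \row_i (if blk i == r then x ord0 i else 0).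

(* sum_r a_r 1_{Z_r} *)
Definition blockdiag (a : 'I_d -> R) : vec := \row_i a (blk i).

Definition prodset (Z : 'I_d -> set vec) : set vec :=
  [set x | forall r, Z r (blockv r x)].

Definition BF (X : set vec) (F : vec -> vec) : R :=
  \big[Num.max/0]_(r < d) sup [set norm2 (blockv r (F x)) | x in X].

End Defs.

(* Main.v *)
Require Import Defs.
From HB Require Import structures.
From mathcomp Require Import all_boot all_order all_algebra.
From mathcomp Require Import all_classical all_reals all_analysis.
From mathcomp Require Import ring lra.
Import Order.TTheory GRing.Theory Num.Theory.
Import numFieldNormedType.Exports.
Local Open Scope classical_set_scope.
Local Open Scope ring_scope.

Section Aux.
Variables (R : realType) (n : nat).
Notation vec := 'rV[R]_n.

Lemma dotv_ge0 (u : vec) : 0 <= dotv u u.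
Proof. by apply: sumr_ge0 => i _; rewrite -expr2 sqr_ge0. Qed.

Lemma norm2_sq (u : vec) : norm2 u ^+ 2 = dotv u u.
Proof. by rewrite /norm2 sqr_sqrtr // dotv_ge0. Qed.

Lemma norm2_ge0 (u : vec) : 0 <= norm2 u.
Proof. exact: sqrtr_ge0. Qed.

Lemma sqrt_le1 (y : R) : 0 <= y -> Num.sqrt y <= 1 + y.
Proof. move=> hy; have := sqr_sqrtr hy; have := sqrtr_ge0 y; nra. Qed.

Lemma norm2_le (u : vec) : norm2 u <= 1 + dotv u u.
Proof. exact/sqrt_le1/dotv_ge0. Qed.

Lemma dotv_suble (u v : vec) : dotv (u - v) (u - v) <= 2 * dotv u u + 2 * dotv v v.
Proof.
rewrite /dotv !mulr_sumr -big_split /=; apply: ler_sum => i _; rewrite !mxE.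
have := sqr_ge0 (u ord0 i + v ord0 i); nra.
Qed.

Lemma proj_VI (S : set vec) y p z : convex_vset S -> is_proj S y p -> S z ->
  dotv (y - p) (z - p) <= 0.
Proof.
move=> cS [Sp Hp] Sz.
set c := dotv (y - p) (z - p); set q := dotv (z - p) (z - p).
have H : forall t, 0 < t -> t <= 1 -> 0 <= - 2 * t * c + t ^+ 2 * q.
  move=> t t0 t1.
  have := Hp _ (cS _ _ Sz Sp t (ltW t0) t1).
  rewrite /norm2 ler_sqrt ?dotv_ge0 // => Hle.
  have E : dotv (y - (t *: z + (1 - t) *: p)) (y - (t *: z + (1 - t) *: p)) =
     dotv (y - p) (y - p) + (- 2 * t * c + t ^+ 2 * q).
    rewrite /c /q /dotv !mulr_sumr.
    do ! (rewrite -sumrB || rewrite -big_split /=).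
    by apply: eq_bigr => i _; rewrite !mxE; ring.
  by move: Hle; rewrite E lerDl.
rewrite leNgt; apply/negP => c0.
have q0 : 0 <= q by exact: dotv_ge0.
pose t := c / (q + c).
have qc0 : 0 < q + c by lra.
have tE : t * (q + c) = c by rewrite /t divfK // gt_eqF.
have t0 : 0 < t by rewrite /t divr_gt0.
have t1 : t <= 1 by rewrite /t ler_pdivrMr // mul1r lerDr.
have := H t t0 t1; nra.
Qed.

Variables (d : nat) (blk : 'I_n -> 'I_d) (Z : 'I_d -> set vec).
Notation X := (prodset blk Z).

Lemma prodset_convex : (forall r, convex_vset (Z r)) -> convex_vset X.
Proof.
move=> HZ x y Hx Hy t t0 t1 r.
have -> : blockv blk r (t *: x + (1 - t) *: y) =
    t *: blockv blk r x + (1 - t) *: blockv blk r y.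
  by apply/rowP => i; rewrite !mxE; case: (blk i == r) => //; rewrite !mulr0 addr0.
exact: HZ.
Qed.

Lemma prodset_repl x z r : X x -> X z -> X (x + blockv blk r (z - x)).
Proof.
move=> Hx Hz s; have [->|ne] := eqVneq s r.
  have -> : blockv blk r (x + blockv blk r (z - x)) = blockv blk r z.
    apply/rowP => i; rewrite !mxE; case: (blk i == r) => //.
    by rewrite addrC subrK.
  exact: Hz.
have -> : blockv blk s (x + blockv blk r (z - x)) = blockv blk s x.
  apply/rowP => i; rewrite !mxE; have [E|//] := eqVneq (blk i) s.
  by rewrite E (negbTE ne) addr0.
exact: Hx.
Qed.

Lemma sum_blk (f : 'I_d -> R) (g : 'I_n -> R) :
  \sum_i f (blk i) * g i = \sum_r f r * \sum_i (if blk i == r then g i else 0).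
Proof.
transitivity (\sum_i \sum_r (if blk i == r then f r * g i else 0)).
  apply: eq_bigr => i _; rewrite (bigD1 (blk i)) //= eqxx big1 ?addr0 //.
  by move=> r; rewrite eq_sym => /negbTE ->.
rewrite exchange_big /=; apply: eq_bigr => r _; rewrite mulr_sumr.
by apply: eq_bigr => i _; case: (blk i == r); rewrite ?mulr0.
Qed.

Lemma wVI (c : 'I_d -> R) y p z : (forall r, convex_vset (Z r)) ->
  (forall i, 0 <= c (blk i)) -> is_proj X y p -> X z ->
  \sum_i c (blk i) * ((y - p) ord0 i * (z - p) ord0 i) <= 0.
Proof.
move=> HZ Hc Hp Hz.
have Xp : X p by case: Hp.
rewrite (eq_bigr (fun i => Num.max 0 (c (blk i)) * ((y - p) ord0 i * (z - p) ord0 i)));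
  last by move=> i _; rewrite max_r.
rewrite (sum_blk (fun r => Num.max 0 (c r))); apply: sumr_le0 => r _.
apply: mulr_ge0_le0; first by rewrite le_max lexx.
have := proj_VI _ _ _ _ (prodset_convex HZ) Hp (prodset_repl _ _ r Xp Hz).
rewrite /dotv (eq_bigr (fun i => if blk i == r then (y - p) ord0 i * (z - p) ord0 i else 0)) //.
by move=> i _; rewrite !mxE; case: (blk i == r); ring.
Qed.

Lemma bounded_X : (forall r, compact (Z r)) -> exists Mb, forall z, X z -> dotv z z <= Mb.
Proof.
move=> HZ.
have H : forall r, exists M : R, forall z, Z r z -> forall i, `|z ord0 i| <= M.
  move=> r; have [M0 [_ HM]] := compact_bounded (HZ r).
  exists (M0 + 1) => z Zz i.
  have := HM (M0 + 1) ltac:(by rewrite ltrDl ltr01) z Zz => /= Hn.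
  apply: le_trans Hn.
  rewrite [X in _ <= X]mx_normrE; apply/bigmax_geP; right; exists (ord0, i) => //.
have [M HM] := choice H.
exists (\sum_i M (blk i) ^+ 2) => z Xz; apply: ler_sum => i _.
have := HM (blk i) _ (Xz (blk i)) i; rewrite mxE eqxx => h.
rewrite -expr2 -(real_normK (num_real (z ord0 i))).
by apply: lerXn2r; rewrite ?nnegrE ?normr_ge0 //; apply: le_trans h.
Qed.

Lemma step_ineq (W a b c s G G' : 'I_n -> R) (eta : R) :
  (forall i, 0 <= W i) ->
  \sum_i W i * ((a i - eta * G i - b i) * (s i - b i)) <= 0 ->
  \sum_i W i * ((a i - eta * G' i - c i) * (b i - c i)) <= 0 ->
  \sum_i W i * ((a i - eta * G i - b i) * (c i - b i)) <= 0 ->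
  \sum_i W i * (b i - s i) ^+ 2 <=
    \sum_i W i * (a i - s i) ^+ 2
    - \sum_i W i * ((a i - c i) ^+ 2 + (b i - c i) ^+ 2)
    + 2 * eta * \sum_i W i * (G i * (s i - c i))
    + 2 * eta ^+ 2 * \sum_i W i * (G i - G' i) ^+ 2.
Proof.
move=> HW H1 H2 H3.
have Hsq : 0 <= \sum_i W i * (eta * (G i - G' i) - (c i - b i)) ^+ 2.
  by apply: sumr_ge0 => i _; rewrite mulr_ge0 ?sqr_ge0.
rewrite -subr_ge0.
have -> : \sum_i W i * (a i - s i) ^+ 2
    - \sum_i W i * ((a i - c i) ^+ 2 + (b i - c i) ^+ 2)
    + 2 * eta * \sum_i W i * (G i * (s i - c i))
    + 2 * eta ^+ 2 * \sum_i W i * (G i - G' i) ^+ 2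
    - \sum_i W i * (b i - s i) ^+ 2 =
   -2 * \sum_i W i * ((a i - eta * G i - b i) * (s i - b i))
   -4 * \sum_i W i * ((a i - eta * G' i - c i) * (b i - c i))
   -2 * \sum_i W i * ((a i - eta * G i - b i) * (c i - b i))
   + 2 * \sum_i W i * (eta * (G i - G' i) - (c i - b i)) ^+ 2.
  rewrite !mulr_sumr.
  do ! (rewrite -sumrB || rewrite -big_split /=).
  by apply: eq_bigr => i _; ring.
lra.
Qed.

Lemma dotv_addle (u v : vec) : dotv (u + v) (u + v) <= 2 * dotv u u + 2 * dotv v v.
Proof.
rewrite /dotv !mulr_sumr -big_split /=; apply: ler_sum => i _; rewrite !mxE.
have := sqr_ge0 (u ord0 i - v ord0 i); nra.
Qed.

Lemma dotv0 : dotv (0 : vec) 0 = 0.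
Proof. by rewrite /dotv big1 // => i _; rewrite mxE mul0r. Qed.

Lemma dotv_blockv r (v : vec) :
  dotv (blockv blk r v) (blockv blk r v) = \sum_i (if blk i == r then v ord0 i * v ord0 i else 0).
Proof. by apply: eq_bigr => i _; rewrite !mxE; case: (blk i == r); rewrite ?mulr0. Qed.

Lemma dotv_blockv_le r (v : vec) : dotv (blockv blk r v) (blockv blk r v) <= dotv v v.
Proof.
rewrite dotv_blockv; apply: ler_sum => i _; case: (blk i == r) => //.
by rewrite -expr2 sqr_ge0.
Qed.

End Aux.

Lemma sq_lip (R : realType) (p q L : R) : 0 <= p -> p <= L * q -> 0 <= q -> p ^+ 2 <= L ^+ 2 * q ^+ 2.
Proof. move=> p0 pq q0; nra. Qed.
Theorem corollary2 (R : realType) (n d : nat) (blk : 'I_n -> 'I_d)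
  (Z : 'I_d -> set 'rV[R]_n)
  (HZsupp : forall r z, Z r z -> forall i, blk i != r -> z ord0 i = 0)
  (HZne : forall r, Z r !=set0)
  (HZconv : forall r, convex_vset (Z r))
  (HZcpt : forall r, compact (Z r))
  (F : 'rV[R]_n -> 'rV[R]_n) (L : R)
  (HFlip : forall x y, prodset blk Z x -> prodset blk Z y ->
      norm2 (F x - F y) <= L * norm2 (x - y))
  (alpha ell h : R) (a w : 'I_d -> 'rV[R]_n -> R)
  (Hell : 0 < ell)
  (Halip : forall r x y, prodset blk Z x -> prodset blk Z y ->
      `|a r x - a r y| <= alpha * norm2 (x - y))
  (HAbd : forall x, prodset blk Z x -> forall i,
      ell <= blockdiag blk (a^~ x) ord0 i <= h)
  (HWbd : forall x, prodset blk Z x -> forall i,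
      ell <= blockdiag blk (w^~ x) ord0 i <= h)
  (Hminty : forall (T : nat) (xs : nat -> 'rV[R]_n),
      (forall t, (1 <= t <= T)%N -> prodset blk Z (xs t)) ->
      exists2 xstar, prodset blk Z xstar &
        0 <= \sum_(1 <= t < T.+1)
               dotv (xs t - xstar)
                 (hadamard (hadamard (F (xs t)) (blockdiag blk (a^~ (xs t))))
                           (blockdiag blk (w^~ xstar))))
  (eta : R) (Heta0 : 0 < eta)
  (Heta : (4 * eta) ^+ 2 *
          (h ^+ 3 * L ^+ 2 + h * (BF blk (prodset blk Z) F) ^+ 2 * alpha ^+ 2 * d%:R)
          <= ell)
  (x xh : nat -> 'rV[R]_n)
  (Hx0 : prodset blk Z (x 0%N)) (Hxh1 : xh 1%N = x 0%N)
  (Hxt : forall t, (1 <= t)%N ->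
      is_proj (prodset blk Z)
        (xh t - eta *: hadamard (blockdiag blk (a^~ (x t.-1))) (F (x t.-1))) (x t))
  (Hxht : forall t, (1 <= t)%N ->
      is_proj (prodset blk Z)
        (xh t - eta *: hadamard (blockdiag blk (a^~ (x t))) (F (x t))) (xh t.+1))
  (T : nat) :
  \sum_(1 <= t < T.+1) (norm2 (x t - xh t) ^+ 2 + norm2 (x t - xh t.+1) ^+ 2)
    <= 2 * (diam2 (prodset blk Z)) ^+ 2 * h / ell.
Proof.
set X := prodset blk Z.
have HXconv : convex_vset X := prodset_convex _ _ _ blk Z HZconv.
have [hlt|hge] := ltP h 0.
  have noi : forall i : 'I_n, False.
    by move=> i; have /andP[h1 h2] := HAbd _ Hx0 i; lra.
  have dot0 : forall u v : 'rV[R]_n, dotv u v = 0.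
    by move=> u v; rewrite /dotv big1 // => i; case: (noi i).
  have norm0 : forall u : 'rV[R]_n, norm2 u = 0.
    by move=> u; rewrite /norm2 dot0 sqrtr0.
  have D0 : diam2 X = 0.
    apply/eqP; rewrite eq_le; apply/andP; split.
      apply: ge_sup; first by exists (norm2 (x 0%N - x 0%N)); exists (x 0%N) => //; exists (x 0%N).
      by move=> _ [u _ [v _ <-]]; rewrite norm0.
    have <- : norm2 (x 0%N - x 0%N) = 0 by rewrite norm0.
    apply: sup_upper_bound; last by exists (x 0%N) => //; exists (x 0%N).
    split; first by exists (norm2 (x 0%N - x 0%N)); exists (x 0%N) => //; exists (x 0%N).
    by exists 0 => _ [u _ [v _ <-]]; rewrite norm0.
  rewrite D0 big1 ?expr0n /= ?mulr0 ?mul0r // => t _.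
  by rewrite !norm0 expr0n /= addr0.
have HxX : forall t, X (x t).
  by case=> [|t] //; case: (Hxt t.+1 erefl).
have HxhX : forall t, (1 <= t)%N -> X (xh t).
  case=> [//|[|t]] _; first by rewrite Hxh1.
  by case: (Hxht t.+1 erefl).
have [Mb HMb] := bounded_X _ _ _ blk Z HZcpt.
have Hdiam : forall u v, X u -> X v -> norm2 (u - v) <= diam2 X.
  move=> u v Hu Hv; apply: sup_upper_bound; last by exists u => //; exists v.
  split; first by exists (norm2 (u - v)); exists u => //; exists v.
  exists (1 + (2 * Mb + 2 * Mb)) => _ [u' Hu' [v' Hv' <-]].
  apply: le_trans (norm2_le _ _ _) _; rewrite lerD2l.
  apply: le_trans (dotv_suble _ _ _ _) _.
  by have := HMb _ Hu'; have := HMb _ Hv'; lra.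
set B := BF blk X F.
have HBF : forall z r, X z -> norm2 (blockv blk r (F z)) <= B.
  move=> z r Hz; apply: (@le_trans _ _ (sup [set norm2 (blockv blk r (F x)) | x in X])).
    apply: sup_upper_bound; last by exists z.
    split; first by exists (norm2 (blockv blk r (F z))); exists z.
    exists (1 + (2 * (L ^+ 2 * (2 * Mb + 2 * Mb)) + 2 * dotv (F (x 0%N)) (F (x 0%N)))).
    move=> _ [z' Hz' <-].
    apply: le_trans (norm2_le _ _ _) _; rewrite lerD2l.
    apply: le_trans (dotv_blockv_le _ _ _ _ _ _) _.
    have -> : F z' = (F z' - F (x 0%N)) + F (x 0%N) by rewrite subrK.
    apply: le_trans (dotv_addle _ _ _ _) _.
    rewrite lerD2r ler_pM2l //.
    have := HFlip _ _ Hz' Hx0 => hl.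
    have := sq_lip _ _ _ _ (norm2_ge0 _ _ _) hl (norm2_ge0 _ _ _); rewrite !norm2_sq => hl2.
    apply: le_trans hl2 _; apply: ler_wpM2l; first exact: sqr_ge0.
    apply: le_trans (dotv_suble _ _ _ _) _.
    by have := HMb _ Hz'; have := HMb _ Hx0; lra.
  by rewrite /B /BF; apply/bigmax_geP; right; exists r.
have [s Hs Hm] := Hminty T x (fun t _ => HxX t).
pose Wv i := w (blk i) s.
have HW : forall i, ell <= Wv i <= h.
  by move=> i; have := HWbd s Hs i; rewrite mxE.
have HWnn : forall i, 0 <= (fun r => w r s) (blk i).
  by move=> i; have /andP[h1 _] := HW i; rewrite /Wv in h1 *; lra.
have HA : forall t i, ell <= a (blk i) (x t) <= h.
  by move=> t i; have := HAbd _ (HxX t) i; rewrite mxE.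
pose P t := \sum_i Wv i * (xh t ord0 i - s ord0 i) ^+ 2.
pose e t := dotv (x t - xh t) (x t - xh t).
pose f t := dotv (x t - xh t.+1) (x t - xh t.+1).
pose m t := dotv (x t - s)
  (hadamard (hadamard (F (x t)) (blockdiag blk (a^~ (x t)))) (blockdiag blk (w^~ s))).
pose K0 := h ^+ 3 * L ^+ 2 + h * B ^+ 2 * alpha ^+ 2 * d%:R.
have Hstep : forall t, (1 <= t)%N ->
    P t.+1 <= P t - ell * (e t + f t) - 2 * eta * m t + ell / 2 * (e t + f t.-1).
  move=> t ht.
  have H1 := @wVI _ _ _ blk Z (fun r => w r s) _ _ _ HZconv HWnn (Hxht t ht) Hs.
  have H2 := @wVI _ _ _ blk Z (fun r => w r s) _ _ _ HZconv HWnn (Hxt t ht) (HxhX _ (leqW ht)).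
  have H3 := @wVI _ _ _ blk Z (fun r => w r s) _ _ _ HZconv HWnn (Hxht t ht) (HxX t).
  rewrite /hadamard /blockdiag in H1 H2 H3.
  move: H1; under eq_bigr => i _ do rewrite !mxE; move=> H1.
  move: H2; under eq_bigr => i _ do rewrite !mxE; move=> H2.
  move: H3; under eq_bigr => i _ do rewrite !mxE; move=> H3.
  have S := step_ineq _ _ (fun i => w (blk i) s) (fun i => xh t ord0 i) (fun i => xh t.+1 ord0 i) (fun i => x t ord0 i)
     (fun i => s ord0 i) (fun i => a (blk i) (x t) * F (x t) ord0 i)
     (fun i => a (blk i) (x t.-1) * F (x t.-1) ord0 i) eta HWnn H1 H2 H3.
  rewrite /= in S.
  have Heta' : (4 * eta) ^+ 2 * K0 <= ell := Heta.
  have F1 : ell * (e t + f t) <=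
      \sum_i w (blk i) s * ((xh t ord0 i - x t ord0 i) ^+ 2 + (xh t.+1 ord0 i - x t ord0 i) ^+ 2).
    rewrite /e /f /dotv -big_split mulr_sumr; apply: ler_sum => i _; rewrite !mxE.
    have /andP[h1 h2] := HW i; rewrite /Wv in h1 h2.
    rewrite [X in _ <= _ * X](_ : _ = (x t ord0 i - xh t ord0 i) * (x t ord0 i - xh t ord0 i)
       + (x t ord0 i - xh t.+1 ord0 i) * (x t ord0 i - xh t.+1 ord0 i)); last by ring.
    by apply: ler_wpM2r => //; rewrite addr_ge0 // -expr2 sqr_ge0.
  have F2 : \sum_i w (blk i) s * (a (blk i) (x t) * F (x t) ord0 i * (s ord0 i - x t ord0 i))
      = - m t.
    by rewrite /m /dotv -sumrN; apply: eq_bigr => i _; rewrite /hadamard /blockdiag !mxE; ring.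
  set Dx := dotv (x t - x t.-1) (x t - x t.-1).
  set Q := \sum_i w (blk i) s * (a (blk i) (x t) * F (x t) ord0 i
                                 - a (blk i) (x t.-1) * F (x t.-1) ord0 i) ^+ 2.
  have Q1 : Q <= h * \sum_i (a (blk i) (x t) * F (x t) ord0 i
                                 - a (blk i) (x t.-1) * F (x t.-1) ord0 i) ^+ 2.
    rewrite /Q mulr_sumr; apply: ler_sum => i _; apply: ler_wpM2r; first exact: sqr_ge0.
    by have /andP[_ h2] := HW i.
  have Q2 : \sum_i (a (blk i) (x t) * F (x t) ord0 i
                                 - a (blk i) (x t.-1) * F (x t.-1) ord0 i) ^+ 2
      <= 2 * h ^+ 2 * dotv (F (x t) - F (x t.-1)) (F (x t) - F (x t.-1))
       + 2 * \sum_i (a (blk i) (x t) - a (blk i) (x t.-1)) ^+ 2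
                  * (F (x t.-1) ord0 i * F (x t.-1) ord0 i).
    rewrite /dotv !mulr_sumr -big_split /=; apply: ler_sum => i _; rewrite !mxE.
    have /andP[h1 h2] := HA t i.
    set A := a (blk i) (x t); set A' := a (blk i) (x t.-1).
    set G1 := F (x t) ord0 i; set G2 := F (x t.-1) ord0 i.
    have e1 : (A * G1 - A' * G2) ^+ 2 <= 2 * (A * (G1 - G2)) ^+ 2 + 2 * ((A - A') * G2) ^+ 2.
      have := sqr_ge0 (A * (G1 - G2) - (A - A') * G2); nra.
    have e2 : (A * (G1 - G2)) ^+ 2 <= h ^+ 2 * ((G1 - G2) * (G1 - G2)).
      rewrite exprMn -expr2; apply: ler_wpM2r; first exact: sqr_ge0.
      have hA1 : ell <= A := h1; have hA2 : A <= h := h2; nra.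
    have e3 : ((A - A') * G2) ^+ 2 = (A - A') ^+ 2 * (G2 * G2) by rewrite exprMn expr2.
    lra.
  have Q3 : dotv (F (x t) - F (x t.-1)) (F (x t) - F (x t.-1)) <= L ^+ 2 * Dx.
    have := sq_lip _ _ _ _ (norm2_ge0 _ _ _) (HFlip _ _ (HxX t) (HxX t.-1)) (norm2_ge0 _ _ _).
    by rewrite !norm2_sq.
  have Q4 : \sum_i (a (blk i) (x t) - a (blk i) (x t.-1)) ^+ 2
                  * (F (x t.-1) ord0 i * F (x t.-1) ord0 i)
            <= d%:R * (alpha ^+ 2 * Dx * B ^+ 2).
    rewrite (sum_blk _ _ _ blk (fun r => (a r (x t) - a r (x t.-1)) ^+ 2)
                 (fun i => F (x t.-1) ord0 i * F (x t.-1) ord0 i)) /=.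
    apply: (@le_trans _ _ (\sum_(r < d) alpha ^+ 2 * Dx * B ^+ 2)); last first.
      by rewrite sumr_const card_ord mulr_natl.
    apply: ler_sum => r _.
    rewrite -dotv_blockv; apply: ler_pM; first exact: sqr_ge0.
    - exact: dotv_ge0.
    - have := sq_lip _ _ _ _ (normr_ge0 _) (Halip r _ _ (HxX t) (HxX t.-1)) (norm2_ge0 _ _ _).
      by rewrite norm2_sq real_normK ?num_real.
    - rewrite -norm2_sq; have := HBF _ r (HxX t.-1); have := norm2_ge0 _ _ (blockv blk r (F (x t.-1))).
      nra.
  have Q5 : Dx <= 2 * e t + 2 * f t.-1.
    rewrite /Dx /e /f prednK //.
    have -> : x t - x t.-1 = (x t - xh t) - (x t.-1 - xh t) by rewrite opprB addrA subrK.
    exact: dotv_suble.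
  have c0 : 0 <= 2 * h ^+ 2 * L ^+ 2 + 2 * d%:R * alpha ^+ 2 * B ^+ 2.
    apply: addr_ge0.
      by apply: mulr_ge0; [apply: mulr_ge0; [exact: ler0n|exact: sqr_ge0]|exact: sqr_ge0].
    apply: mulr_ge0; [|exact: sqr_ge0].
    by apply: mulr_ge0; [apply: mulr_ge0; exact: ler0n|exact: sqr_ge0].
  have R1 : \sum_i (a (blk i) (x t) * F (x t) ord0 i
                                 - a (blk i) (x t.-1) * F (x t.-1) ord0 i) ^+ 2
       <= (2 * h ^+ 2 * L ^+ 2 + 2 * d%:R * alpha ^+ 2 * B ^+ 2) * Dx.
    have := ler_wpM2l (_ : 0 <= 2 * h ^+ 2) Q3.
    move=> /(_ ltac:(by rewrite mulr_ge0 ?sqr_ge0)) => Q3'.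
    lra.
  have R2 : Q <= h * ((2 * h ^+ 2 * L ^+ 2 + 2 * d%:R * alpha ^+ 2 * B ^+ 2) *
                      (2 * e t + 2 * f t.-1)).
    apply: le_trans Q1 _; apply: ler_wpM2l => //.
    apply: le_trans R1 _; exact: ler_wpM2l.
  have ef0 : 0 <= e t + f t.-1 by rewrite addr_ge0 // dotv_ge0.
  have R3 : 2 * eta ^+ 2 * Q <= ell / 2 * (e t + f t.-1).
    apply: le_trans (_ : _ <= 2 * eta ^+ 2 * (h * ((2 * h ^+ 2 * L ^+ 2 + 2 * d%:R * alpha ^+ 2 * B ^+ 2) *
                      (2 * e t + 2 * f t.-1)))) _.
      by apply: ler_wpM2l => //; rewrite mulr_ge0 ?sqr_ge0.
    have -> : 2 * eta ^+ 2 * (h * ((2 * h ^+ 2 * L ^+ 2 + 2 * d%:R * alpha ^+ 2 * B ^+ 2) *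
                      (2 * e t + 2 * f t.-1))) = ((4 * eta) ^+ 2 * K0) / 2 * (e t + f t.-1).
      by rewrite /K0; field.
    by apply: ler_wpM2r => //; rewrite ler_pM2r.
  have S' : P t.+1 <= P t -
    \sum_i w (blk i) s *
       ((xh t ord0 i - x t ord0 i) ^+ 2 + (xh t.+1 ord0 i - x t ord0 i) ^+ 2) +
    2 * eta * \sum_i w (blk i) s *
       (a (blk i) (x t) * F (x t) ord0 i * (s ord0 i - x t ord0 i)) +
    2 * eta ^+ 2 * Q := S.
  rewrite F2 in S'; lra.
have f0 : f 0%N = 0 by rewrite /f Hxh1 subrr dotv0.
have Hind : forall T', P T'.+1 + ell / 2 * \sum_(1 <= t < T'.+1) (e t + f t) + ell / 2 * f T'
    <= P 1%N - 2 * eta * \sum_(1 <= t < T'.+1) m t.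
  elim=> [|T' IH].
    rewrite !big_geq // f0; lra.
  rewrite !(big_nat_recr T'.+1) //=.
  have := Hstep T'.+1 erefl; rewrite /=.
  lra.
have HT := Hind T.
have P0 : 0 <= P T.+1.
  by apply: sumr_ge0 => i _; apply: mulr_ge0; [have /andP[h1 _] := HW i; lra | exact: sqr_ge0].
have fT : 0 <= f T by exact: dotv_ge0.
have Hm' : 0 <= \sum_(1 <= t < T.+1) m t := Hm.
have etam : 0 <= eta * \sum_(1 <= t < T.+1) m t by rewrite mulr_ge0 // ltW.
have ellf : 0 <= ell * f T by rewrite mulr_ge0 // ltW.
have P1 : P 1%N <= h * diam2 X ^+ 2.
  apply: (@le_trans _ _ (h * dotv (x 0%N - s) (x 0%N - s))).
    rewrite /P Hxh1 /dotv mulr_sumr; apply: ler_sum => i _; rewrite !mxE -expr2.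
    by apply: ler_wpM2r; [exact: sqr_ge0 | have /andP[_ h2] := HW i].
  apply: ler_wpM2l => //; rewrite -norm2_sq.
  have := Hdiam _ _ (HxX 0%N) Hs; have := norm2_ge0 _ _ (x 0%N - s); nra.
under eq_bigr => t _ do rewrite !norm2_sq.
have -> : \sum_(1 <= t < T.+1) (dotv (x t - xh t) (x t - xh t) + dotv (x t - xh t.+1) (x t - xh t.+1))
   = \sum_(1 <= t < T.+1) (e t + f t) by [].
rewrite ler_pdivlMr //.
lra.
Qed.
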